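(* Let $N_0\ge 1$ be an integer, $\lambda>0$, and for each $i\in\mathbb{N}$ let $\alpha_i>0$, $\rho_i>0$, and let $\mu_i(j),\sigma_i(j)\in\mathbb{R}$ be given for $j\ge N_0\vee i$. Assume: (i) for each $i\in\mathbb{N}$, the sequences $\{\mu_i(j)\}_{j\ge N_0\vee i}$ and $\{\sigma_i(j)\}_{j\ge N_0\vee i}$ are bounded; (ii) there exist constants $0<\underline{\beta}\le\overline{\beta}$ with $\underline{\beta}\le\beta_i(j)\le\overline{\beta}$ for all $j\ge N_0$ and $1\le i\le j$, where $\beta_i(j)$ is defined in the context. Then there exist real numbers $\{A(j),k_i(j)\}_{j\ge N_0,\,1\le i\le j}$ satisfying, for every $j\ge N_0$ and $1\le i\le j$, $$\frac{1}{A(j)}=\beta_\Sigma(j)+\lambda-\Big(\alpha_\Sigma(j)\sum_{i=1}^j\frac{\lambda A(j+1)e^{-\alpha_i(k_i(j+1)-k_i(j))}}{\alpha_i}\Big)\frac{1}{A(j)},$$ $$k_i(j)=\frac{(\beta_i(j)+\lambda)A(j)-1}{\alpha_i}-\frac{\lambda A(j+1)e^{-\alpha_i(k_i(j+1)-k_i(j))}}{\alpha_i},$$ together with the bounds $$\frac{1}{\overline{\beta}+\lambda}<A(j)\le\frac{1}{\underline{\beta}},\qquad A(j)e^{-\alpha_ik_i(j)}\le\frac{1}{\underline{\beta}},\qquad -\ln\Big(\frac{\overline{\beta}+\lambda}{\underline{\beta}}\Big)\le\alpha_ik_i(j)\le\frac{\overline{\beta}+\lambda}{\underline{\beta}}-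1.$$
   Context: For $j\ge N_0$ and $1\le i\le j$ define $\alpha_\Sigma(j):=\big(\sum_{i=1}^j 1/\alpha_i\big)^{-1}$, $\beta_i(j):=\rho_i+\alpha_i\mu_i(j)-\tfrac12\alpha_i^2\sigma_i^2(j)$, $\beta_\Sigma(j):=\alpha_\Sigma(j)\sum_{i=1}^j \beta_i(j)/\alpha_i$. (Assumption (ii) implies $\underline{\beta}\le\beta_\Sigma(j)\le\overline{\beta}$.) *)

(* Defs.v *)
From Stdlib Require Import Reals Lra Lia.
Open Scope R_scope.

Fixpoint sum1 (f : nat -> R) (j : nat) : R :=
  match j with
  | O => 0
  | S j' => sum1 f j' + f (S j')
  end.

Definition alphaSigma (alpha : nat -> R) (j : nat) : R :=
  / sum1 (fun i => / alpha i) j.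

Definition beta (alpha rho : nat -> R) (mu sigma : nat -> nat -> R)
  (i j : nat) : R :=
  rho i + alpha i * mu i j - / 2 * (alpha i) ^ 2 * (sigma i j) ^ 2.

Definition betaSigma (alpha rho : nat -> R) (mu sigma : nat -> nat -> R)
  (j : nat) : R :=
  alphaSigma alpha j * sum1 (fun i => beta alpha rho mu sigma i j / alpha i) j.

(* Main.v *)
Require Import Defs.
From Stdlib Require Import Reals Lra Lia Classical ClassicalEpsilon.
From mathcomp Require all_boot all_order all_algebra all_classical all_reals all_analysis Rstruct Rstruct_topology.
Open Scope R_scope.

Lemma sum1_ext (f g : nat -> R) j : (forall i, (1 <= i <= j)%nat -> f i = g i) -> sum1 f j = sum1 g j.
Proof.
induction j; intros H; simpl; [reflexivity|].
rewrite IHj by (intros; apply H; lia). rewrite (H (S j)) by lia. reflexivity.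
Qed.

Lemma sum1_le (f g : nat -> R) j : (forall i, (1 <= i <= j)%nat -> f i <= g i) -> sum1 f j <= sum1 g j.
Proof.
induction j; intros H; simpl; [lra|].
assert (sum1 f j <= sum1 g j) by (apply IHj; intros; apply H; lia).
assert (f (S j) <= g (S j)) by (apply H; lia). lra.
Qed.

Lemma sum1_lt (f g : nat -> R) j : (1 <= j)%nat -> (forall i, (1 <= i <= j)%nat -> f i < g i) -> sum1 f j < sum1 g j.
Proof.
intros Hj H. destruct j; [lia|]. simpl.
assert (sum1 f j <= sum1 g j) by (apply sum1_le; intros; apply Rlt_le, H; lia).
assert (f (S j) < g (S j)) by (apply H; lia). lra.
Qed.

Lemma sum1_zero j : sum1 (fun _ => 0) j = 0.
Proof. induction j; simpl; [reflexivity| rewrite IHj; ring]. Qed.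

Lemma sum1_plus (f g : nat -> R) j : sum1 (fun i => f i + g i) j = sum1 f j + sum1 g j.
Proof. induction j; simpl; [ring| rewrite IHj; ring]. Qed.

Lemma sum1_scal (f : nat -> R) c j : sum1 (fun i => c * f i) j = c * sum1 f j.
Proof. induction j; simpl; [ring| rewrite IHj; ring]. Qed.

Lemma sum1_pos (f : nat -> R) j : (1 <= j)%nat -> (forall i, (1 <= i <= j)%nat -> 0 < f i) -> 0 < sum1 f j.
Proof. intros. rewrite <- (sum1_zero j). apply sum1_lt; auto. Qed.

Lemma cont_sum1 (f : nat -> R -> R) j : (forall i, continuity (f i)) -> continuity (fun A => sum1 (fun i => f i A) j).
Proof.
intros H; induction j; simpl.
- apply continuity_const. intros x y; reflexivity.
- apply (continuity_plus (fun A => sum1 (fun i => f i A) j) (f (S j))); auto.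
Qed.

Lemma lip_cont (f : R -> R) K : 0 <= K -> (forall a b, Rabs (f a - f b) <= K * Rabs (a - b)) -> continuity f.
Proof.
intros HK H x. unfold continuity_pt, continue_in, limit1_in, limit_in. intros eps Heps.
exists (eps / (K + 1)). split.
- apply Rdiv_lt_0_compat; lra.
- intros y [_ Hy]. simpl in *. unfold R_dist in *.
  eapply Rle_lt_trans; [apply H|].
  apply Rle_lt_trans with ((K+1) * Rabs (y - x)).
  + assert (0 <= Rabs (y - x)) by apply Rabs_pos. nra.
  + apply Rmult_lt_reg_r with (/ (K+1)). apply Rinv_0_lt_compat; lra.
    replace ((K + 1) * Rabs (y - x) * / (K + 1)) with (Rabs (y - x)) by (field; lra).
    exact Hy.
Qed.

Lemma solve1 (c r : R) : 0 < c -> exists x, x + c * exp x = r.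
Proof.
intros Hc.
set (f := fun x => x + c * exp x - r).
assert (Hf : continuity f).
{ unfold f. intros x. apply continuity_pt_minus; [apply continuity_pt_plus|apply continuity_pt_const; intros ? ?; reflexivity].
  - apply derivable_continuous_pt, derivable_pt_id.
  - apply continuity_pt_mult. apply continuity_pt_const; intros ? ?; reflexivity.
    apply derivable_continuous_pt, derivable_pt_exp. }
assert (He : 0 < exp r) by apply exp_pos.
assert (Hlt : r - c * exp r < r) by nra.
assert (He2 : exp (r - c * exp r) < exp r) by (apply exp_increasing; lra).
destruct (IVT f (r - c * exp r) r Hf Hlt) as [z [_ Hz]].
- unfold f. nra.
- unfold f. nra.
- exists z. unfold f in Hz. lra.
Qed.

Lemma solve1_lip (c x1 x2 r1 r2 : R) : 0 < c -> x1 + c * exp x1 = r1 -> x2 + c * exp x2 = r2 ->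
  Rabs (x1 - x2) <= Rabs (r1 - r2).
Proof.
intros Hc H1 H2.
destruct (Rle_lt_dec x2 x1) as [h|h].
- assert (exp x2 <= exp x1).
  { destruct (Req_dec x2 x1) as [->|n]; [lra| apply Rlt_le, exp_increasing; lra]. }
  rewrite (Rabs_right (x1 - x2)) by lra. rewrite Rabs_right by nra. nra.
- assert (exp x1 < exp x2) by (apply exp_increasing; lra).
  rewrite (Rabs_left (x1 - x2)) by lra. rewrite Rabs_left by nra. nra.
Qed.
Section Main.
Variables (N0 : nat) (lam : R) (alpha rho : nat -> R) (mu sigma : nat -> nat -> R) (bL bU : R).
Hypothesis HN0 : (1 <= N0)%nat.
Hypothesis Hlam : 0 < lam.
Hypothesis Halpha : forall i, (1 <= i)%nat -> 0 < alpha i.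
Hypothesis HbL : 0 < bL.
Hypothesis HbLU : bL <= bU.
Hypothesis Hbeta : forall i j : nat, (N0 <= j)%nat -> (1 <= i <= j)%nat ->
     bL <= beta alpha rho mu sigma i j <= bU.

Let bt i j := beta alpha rho mu sigma i j.

Lemma derive_bounds j A Anext (x xnext : nat -> R) :
  (N0 <= j)%nat -> 0 < A -> 0 < Anext ->
  (forall i, (1 <= i <= j)%nat -> Anext * exp (- xnext i) <= / bL) ->
  (forall i, (1 <= i <= j)%nat ->
     x i + lam * Anext * exp (- xnext i) * exp (x i) - (bt i j + lam) * A + 1 = 0) ->
  sum1 (fun i => x i / alpha i) j = 0 ->
  / (bU + lam) < A /\ A <= / bL /\
  forall i, (1 <= i <= j)%nat ->
    A * exp (- x i) <= / bL /\ - ln ((bU + lam) / bL) <= x i /\ x i <= (bU + lam) / bL - 1.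
Proof.
intros Hj HA HAn Hv Heq Hs.
assert (Hj1 : (1 <= j)%nat) by lia.
assert (HV : forall i, (1 <= i <= j)%nat -> A * exp (- x i) <= / bL).
{ intros i Hi. specialize (Heq i Hi). specialize (Hv i Hi). destruct (Hbeta i j Hj Hi) as [b1 b2].
  fold (bt i j) in b1, b2.
  set (c := Anext * exp (- xnext i)) in *. set (e := exp (x i)) in *.
  assert (He : 0 < e) by apply exp_pos.
  assert (He1 : 1 + x i <= e) by apply exp_ineq1_le.
  assert (Hc : 0 < c) by (apply Rmult_lt_0_compat; [lra| apply exp_pos]).
  rewrite exp_Ropp. fold e.
  apply Rnot_lt_le. intros Hcon.
  assert (Hlt : e < bL * A).
  { apply Rmult_lt_reg_r with (/ e). apply Rinv_0_lt_compat; lra.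
    rewrite Rinv_r by lra.
    apply Rmult_lt_reg_l with (/ bL). apply Rinv_0_lt_compat; lra.
    replace (/ bL * (bL * A * / e)) with (A * / e) by (field; lra). lra. }
  assert (HcL : c * bL <= 1).
  { apply Rmult_le_reg_r with (/ bL). apply Rinv_0_lt_compat; lra.
    replace (c * bL * / bL) with c by (field; lra). lra. }
  assert (Hce : c * e < A).
  { apply Rmult_lt_reg_r with bL. lra.
    apply Rle_lt_trans with e. nra. lra. }
  assert (lam * c * e < lam * A) by (rewrite Rmult_assoc; apply Rmult_lt_compat_l; lra).
  replace (lam * Anext * exp (- xnext i) * e) with (lam * c * e) in Heq by (unfold c; ring).
  nra. }
assert (HAl : / (bU + lam) < A).
{ assert (Hsum : 0 < sum1 (fun i => ((bU + lam) * A - 1) * / alpha i) j).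
  { rewrite <- Hs. apply sum1_lt; auto. intros i Hi.
    specialize (Heq i Hi). destruct (Hbeta i j Hj Hi) as [b1 b2]. fold (bt i j) in b1, b2.
    assert (Ha : 0 < alpha i) by (apply Halpha; lia).
    assert (0 < lam * Anext * exp (- xnext i) * exp (x i)).
    { repeat apply Rmult_lt_0_compat; try lra; apply exp_pos. }
    unfold Rdiv. apply Rmult_lt_compat_r. apply Rinv_0_lt_compat; lra. nra. }
  rewrite sum1_scal in Hsum.
  assert (0 < sum1 (fun i => / alpha i) j).
  { apply sum1_pos; auto. intros i Hi. apply Rinv_0_lt_compat, Halpha; lia. }
  assert (H1 : 0 < (bU + lam) * A - 1).
  { destruct (Rlt_dec 0 ((bU + lam) * A - 1)); auto. nra. }
  apply Rmult_lt_reg_l with (bU + lam). lra. rewrite Rinv_r by lra. lra. }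
assert (Hex : exists i, (1 <= i <= j)%nat /\ x i <= 0).
{ apply NNPP. intros Hn.
  assert (0 < sum1 (fun i => x i / alpha i) j).
  { apply sum1_pos; auto. intros i Hi.
    assert (x i > 0). { apply Rnot_le_lt. intros h. apply Hn. exists i. auto. }
    unfold Rdiv. apply Rmult_lt_0_compat. lra. apply Rinv_0_lt_compat, Halpha; lia. }
  lra. }
assert (HAu : A <= / bL).
{ destruct Hex as [i [Hi Hx]]. specialize (HV i Hi).
  assert (1 <= exp (- x i)). { pose proof (exp_ineq1_le (- x i)). lra. }
  nra. }
split; [exact HAl|]. split; [exact HAu|].
intros i Hi. split; [apply HV; auto|].
specialize (Heq i Hi). destruct (Hbeta i j Hj Hi) as [b1 b2]. fold (bt i j) in b1, b2.
split.
-
  specialize (HV i Hi).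
  assert (HUpos : 0 < bU + lam) by lra.
  assert (Hq : exp (- x i) < (bU + lam) / bL).
  { assert (A * (bU + lam) > 1).
    { apply Rmult_lt_reg_r with (/ (bU + lam)). apply Rinv_0_lt_compat; lra.
      replace (A * (bU + lam) * / (bU + lam)) with A by (field; lra). lra. }
    assert (0 < exp (- x i)) by apply exp_pos.
    apply Rmult_lt_reg_l with (A * bL). nra.
    replace (A * bL * ((bU + lam) / bL)) with (A * (bU + lam)) by (field; lra).
    apply Rle_lt_trans with 1; [|lra].
    replace (A * bL * exp (- x i)) with (bL * (A * exp (- x i))) by ring.
    apply Rle_trans with (bL * / bL). apply Rmult_le_compat_l; lra. rewrite Rinv_r; lra. }
  assert (ln (exp (- x i)) < ln ((bU + lam) / bL)) by (apply ln_increasing; [apply exp_pos| exact Hq]).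
  rewrite ln_exp in H. lra.
- assert (0 < lam * Anext * exp (- xnext i) * exp (x i)).
  { repeat apply Rmult_lt_0_compat; try lra; apply exp_pos. }
  assert ((bt i j + lam) * A <= (bU + lam) * / bL).
  { apply Rle_trans with ((bU + lam) * A). apply Rmult_le_compat_r; lra.
    apply Rmult_le_compat_l; lra. }
  unfold Rdiv. lra.
Qed.


Lemma step j Anext (xnext : nat -> R) :
  (N0 <= j)%nat -> 0 < Anext ->
  (forall i, (1 <= i <= j)%nat -> Anext * exp (- xnext i) <= / bL) ->
  exists A (x : nat -> R), / (bU + lam) <= A /\
   (forall i, (1 <= i <= j)%nat ->
     x i + lam * Anext * exp (- xnext i) * exp (x i) - (bt i j + lam) * A + 1 = 0) /\
   sum1 (fun i => x i / alpha i) j = 0.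
Proof.
intros Hj HAn Hv.
assert (Hj1 : (1 <= j)%nat) by lia.
set (c := fun i => lam * Anext * exp (- xnext i)).
assert (Hc : forall i, 0 < c i).
{ intros i; unfold c. repeat apply Rmult_lt_0_compat; try lra; apply exp_pos. }
assert (Hh : forall i A, exists x, x + c i * exp x = (bt i j + lam) * A - 1).
{ intros; apply solve1; auto. }
assert (Hf : exists h : nat -> R -> R, forall i A, h i A + c i * exp (h i A) = (bt i j + lam) * A - 1).
{ exists (fun i A => proj1_sig (constructive_indefinite_description _ (Hh i A))).
  intros i A. exact (proj2_sig (constructive_indefinite_description _ (Hh i A))). }
destruct Hf as [h Hhh].
set (S := fun A => sum1 (fun i => h i A / alpha i) j).
assert (HS : continuity S).
{ unfold S. apply (cont_sum1 (fun i A => h i A / alpha i)). intros i.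
  apply (lip_cont _ (Rabs (bt i j + lam) * Rabs (/ alpha i))).
  - apply Rmult_le_pos; apply Rabs_pos.
  - intros a b. unfold Rdiv.
    replace (h i a * / alpha i - h i b * / alpha i) with ((h i a - h i b) * / alpha i) by ring.
    rewrite Rabs_mult.
    replace (Rabs (bt i j + lam) * Rabs (/ alpha i) * Rabs (a - b))
      with (Rabs ((bt i j + lam) * a - 1 - ((bt i j + lam) * b - 1)) * Rabs (/ alpha i)).
    + apply Rmult_le_compat_r; [apply Rabs_pos|].
      apply (solve1_lip (c i)); auto.
    + replace ((bt i j + lam) * a - 1 - ((bt i j + lam) * b - 1)) with ((bt i j + lam) * (a - b)) by ring.
      rewrite Rabs_mult. ring. }
set (Alo := / (bU + lam)).
set (Ahi := (1 + lam / bL) / bL + 1).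
assert (Hlo : S Alo < 0).
{ unfold S. rewrite <- (sum1_zero j). apply sum1_lt; auto. intros i Hi.
  destruct (Hbeta i j Hj Hi) as [b1 b2]. fold (bt i j) in b1, b2.
  specialize (Hhh i Alo). pose proof (Hc i). assert (0 < exp (h i Alo)) by apply exp_pos.
  assert ((bt i j + lam) * Alo <= 1).
  { unfold Alo. apply Rle_trans with ((bU + lam) * / (bU + lam)).
    apply Rmult_le_compat_r. left; apply Rinv_0_lt_compat; lra. lra. rewrite Rinv_r; lra. }
  assert (h i Alo < 0) by nra.
  unfold Rdiv. assert (0 < / alpha i) by (apply Rinv_0_lt_compat, Halpha; lia). nra. }
assert (Hhi : 0 < S Ahi).
{ unfold S. rewrite <- (sum1_zero j). apply sum1_lt; auto. intros i Hi.
  destruct (Hbeta i j Hj Hi) as [b1 b2]. fold (bt i j) in b1, b2.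
  specialize (Hhh i Ahi). pose proof (Hc i).
  assert (Hci : c i <= lam / bL).
  { unfold c. rewrite Rmult_assoc. unfold Rdiv. apply Rmult_le_compat_l; [lra|]. apply Hv; auto. }
  assert (HA1 : bL * Ahi = 1 + lam / bL + bL) by (unfold Ahi; field; lra).
  assert (Hpos : 0 < h i Ahi).
  { apply Rnot_le_lt. intros hle.
    assert (exp (h i Ahi) <= 1).
    { rewrite <- exp_0. destruct (Rle_lt_or_eq_dec _ _ hle) as [l|e]. left; apply exp_increasing; auto. rewrite e; lra. }
    assert (0 < exp (h i Ahi)) by apply exp_pos.
    assert (0 < Ahi).
    { unfold Ahi. assert (0 < lam / bL) by (apply Rdiv_lt_0_compat; lra).
      assert (0 < (1 + lam / bL) / bL) by (apply Rdiv_lt_0_compat; lra). lra. }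
    assert (0 < bL) by lra.
    assert (c i * exp (h i Ahi) <= c i) by nra.
    nra. }
  unfold Rdiv. assert (0 < / alpha i) by (apply Rinv_0_lt_compat, Halpha; lia). nra. }
assert (Hlh : Alo < Ahi).
{ unfold Alo, Ahi. apply Rlt_trans with (/ bL).
  apply Rinv_lt_contravar. nra. lra.
  assert (0 < lam / bL) by (apply Rdiv_lt_0_compat; lra).
  assert (0 < lam / bL / bL) by (apply Rdiv_lt_0_compat; lra).
  replace ((1 + lam / bL) / bL + 1) with (/ bL + lam / bL / bL + 1) by (field; lra). lra. }
destruct (IVT S Alo Ahi HS Hlh Hlo Hhi) as [A [[HA1 HA2] HSA]].
exists A, (fun i => h i A). split; [exact HA1|]. split.
- intros i Hi. specialize (Hhh i A). unfold c in Hhh. lra.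
- exact HSA.
Qed.

End Main.

Definition Econ (lam : R) (alpha rho : nat -> R) (mu sigma : nat -> nat -> R) (i j : nat) (p : nat * nat -> R) : R :=
  p (i, j) + lam * p (0%nat, S j) * exp (- p (i, S j)) * exp (p (i, j))
  - (beta alpha rho mu sigma i j + lam) * p (0%nat, j) + 1.
Definition Scon (alpha : nat -> R) (j : nat) (p : nat * nat -> R) : R :=
  sum1 (fun i => p (i, j) / alpha i) j.
Definition Vcon (bL : R) (i j : nat) (p : nat * nat -> R) : R :=
  p (0%nat, j) * exp (- p (i, j)) - / bL.
Definition SS (N0 : nat) (lam : R) (alpha rho : nat -> R) (mu sigma : nat -> nat -> R) (bL : R) (T : nat) (p : nat * nat -> R) : Prop :=
  (forall i j, (N0 <= j <= T)%nat /\ (1 <= i <= j)%nat -> Econ lam alpha rho mu sigma i j p = 0) /\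
  (forall j, (N0 <= j <= T)%nat -> Scon alpha j p = 0) /\
  (forall i j, (N0 <= j <= T)%nat /\ (1 <= i <= j)%nat -> Vcon bL i j p <= 0).

Module M.
From HB Require Import structures.
From mathcomp Require Import all_boot all_order all_algebra.
From mathcomp Require Import all_classical all_reals all_analysis.
From mathcomp Require Import Rstruct Rstruct_topology.
Import Order.TTheory GRing.Theory Num.Theory.
Local Open Scope classical_set_scope.
Local Open Scope ring_scope.
Definition PT := nat*nat -> R.
HB.instance Definition _ := Pointed.copy PT (nat*nat -> R).
HB.instance Definition _ := Topological.copy PT (prod_topology (fun _ : nat*nat => R)).

Lemma cc (c : nat*nat) : continuous (fun p : PT => p c).
Proof. exact: (@proj_continuous _ (fun _ => R) c). Qed.
Lemma ck (k : R) : continuous (fun p : PT => k).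
Proof. exact: cst_continuous. Qed.
Lemma cplus (f g : PT -> R) : continuous f -> continuous g -> continuous (fun p => Rplus (f p) (g p)).
Proof. move=> cf cg x; exact: (@continuousD _ R^o PT f g x (cf x) (cg x)). Qed.
Lemma cmult (f g : PT -> R) : continuous f -> continuous g -> continuous (fun p => Rmult (f p) (g p)).
Proof. move=> cf cg x; exact: (@continuousM R PT f g x (cf x) (cg x)). Qed.
Lemma copp (f : PT -> R) : continuous f -> continuous (fun p => Ropp (f p)).
Proof. move=> cf x; exact: (@continuousN _ R^o PT f x (cf x)). Qed.
Lemma cminus (f g : PT -> R) : continuous f -> continuous g -> continuous (fun p => Rminus (f p) (g p)).
Proof. move=> cf cg x; exact: (@continuousB _ R^o PT f g x (cf x) (cg x)). Qed.
Lemma cexp (f : PT -> R) : continuous f -> continuous (fun p => Rtrigo_def.exp (f p)).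
Proof.
move=> cf x. apply: continuous_comp; first exact: cf.
apply/continuity_pt_cvg. apply: derivable_continuous_pt. apply: derivable_pt_exp.
Qed.
Lemma csum1 (f : nat -> PT -> R) j : (forall i, continuous (f i)) -> continuous (fun p => sum1 (fun i => f i p) j).
Proof.
move=> cf; elim: j => [|j IH]; first exact: (ck (IZR Z0)).
exact (cplus _ _ IH (cf j.+1)).
Qed.


Lemma closed_all2 (P : nat -> nat -> Prop) (g : nat -> nat -> PT -> R) (Q : R -> Prop) :
  closed [set y : R | Q y] -> (forall i j, continuous (g i j)) ->
  closed [set p : PT | forall i j, P i j -> Q (g i j p)].
Proof.
move=> cQ cg.
have -> : [set p : PT | forall i j, P i j -> Q (g i j p)] =
  \bigcap_(ij in [set ij : nat * nat | P ij.1 ij.2]) ((g ij.1 ij.2) @^-1` [set y : R | Q y]).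
  apply/seteqP; split => p /= H.
    by move=> [i j] /= Pij; apply: H.
  by move=> i j Pij; apply: (H (i, j)).
apply: closed_bigI => ij _; apply: preimage_closed; last exact: cQ.
by move=> x _; apply: cg.
Qed.

Lemma closed_all1 (P : nat -> Prop) (g : nat -> PT -> R) (Q : R -> Prop) :
  closed [set y : R | Q y] -> (forall j, continuous (g j)) ->
  closed [set p : PT | forall j, P j -> Q (g j p)].
Proof.
move=> cQ cg.
have -> : [set p : PT | forall j, P j -> Q (g j p)] =
  \bigcap_(j in [set j : nat | P j]) ((g j) @^-1` [set y : R | Q y]).
  by apply/seteqP; split => p /= H.
apply: closed_bigI => j _; apply: preimage_closed; last exact: cQ.
by move=> x _; apply: cg.
Qed.

Lemma closed_Req0 : closed [set y : R | y = (IZR Z0)].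
Proof. exact: closed_eq. Qed.

Lemma closed_Rle0 : closed [set y : R | Rle y (IZR Z0)].
Proof.
have -> : [set y : R | Rle y (IZR Z0)] = [set y : R | y <= 0].
  by apply/seteqP; split => y /= H; apply/RleP.
exact: closed_le.
Qed.

Lemma cEcon lam alpha rho mu sigma i j : continuous (Econ lam alpha rho mu sigma i j : PT -> R).
Proof.
rewrite /Econ.
apply: cplus; last exact: ck.
apply: cminus; last (apply: cmult; [exact: ck| exact: cc]).
apply: cplus; first exact: cc.
apply: cmult; last (apply: cexp; exact: cc).
apply: cmult; last (apply: cexp; apply: copp; exact: cc).
apply: cmult; [exact: ck | exact: cc].
Qed.

Lemma cScon alpha j : continuous (Scon alpha j : PT -> R).
Proof.
rewrite /Scon.
apply: (csum1 (fun i p => Rdiv (p (i, j)) (alpha i))) => i.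
apply: cmult; [exact: cc | exact: ck].
Qed.

Lemma cVcon bL i j : continuous (Vcon bL i j : PT -> R).
Proof.
rewrite /Vcon.
apply: cminus; last exact: ck.
apply: cmult; first exact: cc.
apply: cexp; apply: copp; exact: cc.
Qed.

Lemma closed_SS N0 lam alpha rho mu sigma bL T :
  closed [set p : PT | SS N0 lam alpha rho mu sigma bL T p].
Proof.
have h1 := closed_all2 (fun i j => (le N0 j /\ le j T) /\ (le 1 i /\ le i j))
     (fun i j => Econ lam alpha rho mu sigma i j) (fun y => y = (IZR Z0)) closed_Req0
     (fun i j => cEcon lam alpha rho mu sigma i j).
have h2 := closed_all1 (fun j => (le N0 j /\ le j T)) (fun j => Scon alpha j) (fun y => y = (IZR Z0))
     closed_Req0 (fun j => cScon alpha j).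
have h3 := closed_all2 (fun i j => (le N0 j /\ le j T) /\ (le 1 i /\ le i j))
     (fun i j => Vcon bL i j) (fun y => Rle y (IZR Z0)) closed_Rle0 (fun i j => cVcon bL i j).
have := closedI h1 (closedI h2 h3).
exact.
Qed.

Lemma nested_mono (S : nat -> set PT) :
  (forall T p, S T.+1 p -> S T p) -> forall T T' p, (T <= T')%N -> S T' p -> S T p.
Proof.
move=> H T T' p le; elim: T' le => [|T' IH]; first by rewrite leqn0 => /eqP ->.
rewrite leq_eqVlt => /orP [/eqP -> //|]; rewrite ltnS => le Sp.
by apply: IH => //; apply: H.
Qed.

Lemma nested_compact (lo hi : nat*nat -> R) (S : nat -> set PT) :
  (forall T, closed (S T)) ->
  (forall T p, S T.+1 p -> S T p) ->
  (forall T, exists p : PT, (forall c, Rle (lo c) (p c) /\ Rle (p c) (hi c)) /\ S T p) ->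
  exists p : PT, (forall c, Rle (lo c) (p c) /\ Rle (p c) (hi c)) /\ forall T, S T p.
Proof.
move=> Scl Sdec Sne.
pose K := [set p : PT | forall c, `[lo c, hi c]%classic (p c)].
have Kc : compact K.
  by apply: (@tychonoff _ (fun _ => R) (fun c => `[lo c, hi c]%classic)) => c; exact: segment_compact.
have := Kc; rewrite compact_In0 => /(_ nat setT (fun T => K `&` S T)).
case.
- by exists S.
- move=> D _.
  pose M := (\max_(i <- finmap.enum_fset D) i)%N.
  have [p [pb Sp]] := Sne M.
  exists p => i; rewrite /= => iD; split.
    by move=> c; rewrite /= in_itv /=; have [a b] := pb c; apply/andP; split; apply/RleP.
  apply: (@nested_mono S Sdec i M p _ Sp).
  by rewrite /M; apply: leq_bigmax_seq.
- move=> p Hp; exists p; split.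
    move=> c; have [Kp _] := Hp 0%N I.
    by have := Kp c; rewrite /= in_itv /= => /andP [a b]; split; apply/RleP.
  by move=> T; have [_ Sp] := Hp T I.
Qed.

Lemma limit_exists N0 lam alpha rho mu sigma bL (lo hi : nat*nat -> R) :
  (forall T p, SS N0 lam alpha rho mu sigma bL (S T) p -> SS N0 lam alpha rho mu sigma bL T p) ->
  (forall T, exists p : nat*nat -> R, (forall c, Rle (lo c) (p c) /\ Rle (p c) (hi c)) /\
      SS N0 lam alpha rho mu sigma bL T p) ->
  exists p : nat*nat -> R, (forall c, Rle (lo c) (p c) /\ Rle (p c) (hi c)) /\
      forall T, SS N0 lam alpha rho mu sigma bL T p.
Proof.
move=> Hd Hn.
exact: (@nested_compact lo hi (fun T => [set p : PT | SS N0 lam alpha rho mu sigma bL T p])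
   (fun T => closed_SS N0 lam alpha rho mu sigma bL T) Hd Hn).
Qed.
End M.

Lemma SS_dec N0 lam alpha rho mu sigma bL T p :
  SS N0 lam alpha rho mu sigma bL (S T) p -> SS N0 lam alpha rho mu sigma bL T p.
Proof.
intros [h1 [h2 h3]]. split; [|split].
- intros i j H. apply h1. lia.
- intros j H. apply h2. lia.
- intros i j H. apply h3. lia.
Qed.

Section Main2.
Variables (N0 : nat) (lam : R) (alpha rho : nat -> R) (mu sigma : nat -> nat -> R) (bL bU : R).
Hypothesis HN0 : (1 <= N0)%nat.
Hypothesis Hlam : 0 < lam.
Hypothesis Halpha : forall i, (1 <= i)%nat -> 0 < alpha i.
Hypothesis HbL : 0 < bL.
Hypothesis HbLU : bL <= bU.
Hypothesis Hbeta : forall i j : nat, (N0 <= j)%nat -> (1 <= i <= j)%nat ->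
     bL <= beta alpha rho mu sigma i j <= bU.

Definition Cb := (bU + lam) / bL.
Definition lo (c : nat * nat) : R := if Nat.eqb (fst c) 0 then / (bU + lam) else - Cb.
Definition hi (c : nat * nat) : R := if Nat.eqb (fst c) 0 then / bL else Cb.
Definition box (p : nat * nat -> R) := forall c, lo c <= p c /\ p c <= hi c.

Lemma Cb_pos : 0 < Cb.
Proof. unfold Cb. apply Rdiv_lt_0_compat; lra. Qed.

Lemma inv_le : / (bU + lam) <= / bL.
Proof. apply Rinv_le_contravar; lra. Qed.

Lemma inv_pos : 0 < / (bU + lam).
Proof. apply Rinv_0_lt_compat; lra. Qed.

Lemma build T : forall d m, (m + d = S T)%nat -> (N0 <= m)%nat ->
  exists p, box p /\
   (forall i j, (m <= j <= T)%nat /\ (1 <= i <= j)%nat -> Econ lam alpha rho mu sigma i j p = 0) /\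
   (forall j, (m <= j <= T)%nat -> Scon alpha j p = 0) /\
   (forall i j, (m <= j <= S T)%nat /\ (1 <= i <= j)%nat -> Vcon bL i j p <= 0).
Proof.
pose proof Cb_pos as HC. pose proof inv_le as HIl. pose proof inv_pos as HIp.
induction d as [|d IH]; intros m Hm HNm.
- exists (fun c => if Nat.eqb (fst c) 0 then / bL else 0).
  split; [|split; [|split]].
  + intros [i j]. unfold lo, hi. simpl. destruct (Nat.eqb i 0); lra.
  + intros i j H. lia.
  + intros j H. lia.
  + intros i j [H1 H2]. unfold Vcon. simpl.
    destruct (Nat.eqb_spec i 0) as [e|e]; [lia|].
    rewrite Ropp_0, exp_0. lra.
- destruct (IH (S m)) as [p [Hb [He [Hs Hv]]]]; [lia|lia|].
  assert (HmT : (m <= T)%nat) by lia.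
  assert (HAn : 0 < p (0%nat, S m)).
  { destruct (Hb (0%nat, S m)) as [b1 _]. unfold lo in b1. simpl in b1. lra. }
  destruct (step N0 lam alpha rho mu sigma bL bU HN0 Hlam Halpha HbL HbLU Hbeta m (p (0%nat, S m)) (fun i => p (i, S m)))
    as [A [x [HA [Heq Hsum]]]]; auto.
  { intros i Hi. assert (Vcon bL i (S m) p <= 0) by (apply Hv; lia). unfold Vcon in H. lra. }
  assert (HA0 : 0 < A) by lra.
  destruct (derive_bounds N0 lam alpha rho mu sigma bL bU HN0 Hlam Halpha HbL HbLU Hbeta m A (p (0%nat, S m)) x (fun i => p (i, S m)))
    as [HAl [HAu Hx]]; auto.
  { intros i Hi. assert (Vcon bL i (S m) p <= 0) by (apply Hv; lia). unfold Vcon in H. lra. }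
  set (p' := fun c : nat * nat => if Nat.eqb (snd c) m then
               (if Nat.eqb (fst c) 0 then A else if Nat.leb (fst c) m then x (fst c) else 0) else p c).
  assert (Po : forall i k, k <> m -> p' (i, k) = p (i, k)).
  { intros i k hk. unfold p'. simpl. destruct (Nat.eqb_spec k m); [lia|reflexivity]. }
  assert (P0 : p' (0%nat, m) = A).
  { unfold p'. simpl. rewrite Nat.eqb_refl. reflexivity. }
  assert (Pi : forall i, (1 <= i <= m)%nat -> p' (i, m) = x i).
  { intros i Hi. unfold p'. simpl. rewrite Nat.eqb_refl.
    destruct (Nat.eqb_spec i 0); [lia|]. destruct (Nat.leb_spec i m); [reflexivity|lia]. }
  exists p'. split; [|split; [|split]].
  + intros [i k]. destruct (Nat.eq_dec k m) as [->|hk].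
    * unfold lo, hi. destruct (Nat.eqb_spec i 0) as [->|ni].
      -- rewrite P0. simpl. lra.
      -- simpl. rewrite (proj2 (Nat.eqb_neq i 0) ni).
         destruct (Nat.le_gt_cases i m) as [him|him].
         ++ rewrite Pi by lia. destruct (Hx i) as [_ [hl hu]]; [lia|].
            assert (ln Cb <= Cb - 1).
            { pose proof (exp_ineq1_le (ln Cb)). rewrite exp_ln in H by exact HC. lra. }
            unfold Cb in *. split; lra.
         ++ unfold p'. simpl. rewrite Nat.eqb_refl, (proj2 (Nat.eqb_neq i 0) ni).
            destruct (Nat.leb_spec i m); [lia|]. lra.
    * rewrite Po by exact hk. apply Hb.
  + intros i j [Hj Hi]. destruct (Nat.eq_dec j m) as [->|hj].
    * unfold Econ. rewrite Pi by lia. rewrite P0. rewrite !Po by lia.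
      rewrite <- (Heq i) by lia. ring.
    * replace (Econ lam alpha rho mu sigma i j p') with (Econ lam alpha rho mu sigma i j p).
      { apply He. lia. }
      unfold Econ. rewrite !Po by lia. reflexivity.
  + intros j Hj. destruct (Nat.eq_dec j m) as [->|hj].
    * unfold Scon. rewrite <- Hsum. apply sum1_ext. intros i Hi. rewrite Pi by lia. reflexivity.
    * unfold Scon. rewrite <- (Hs j) by lia. apply sum1_ext. intros i Hi. rewrite Po by lia. reflexivity.
  + intros i j [Hj Hi]. destruct (Nat.eq_dec j m) as [->|hj].
    * unfold Vcon. rewrite P0, Pi by lia. destruct (Hx i) as [h _]; [lia|]. lra.
    * unfold Vcon. rewrite !Po by lia. apply (Hv i j). lia.
Qed.

Lemma nonempty T : exists p, box p /\ SS N0 lam alpha rho mu sigma bL T p.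
Proof.
destruct (build (T + N0) (S (T + N0) - N0) N0) as [p [Hb [He [Hs Hv]]]]; [lia|lia|].
exists p. split; [exact Hb|]. split; [|split].
- intros i j H. apply He. lia.
- intros j H. apply Hs. lia.
- intros i j H. apply Hv. lia.
Qed.

End Main2.

Theorem theorem3p2
  (N0 : nat) (lambda : R)
  (alpha rho : nat -> R) (mu sigma : nat -> nat -> R)
  (betaL betaU : R) :
  (1 <= N0)%nat ->
  0 < lambda ->
  (forall i : nat, (1 <= i)%nat -> 0 < alpha i) ->
  (forall i : nat, (1 <= i)%nat -> 0 < rho i) ->
  (* (i) boundedness of mu_i(.) and sigma_i(.) on j >= N0 \/ i *)
  (forall i : nat, (1 <= i)%nat ->
     (exists M : R, forall j : nat, (Nat.max N0 i <= j)%nat -> Rabs (mu i j) <= M) /\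
     (exists M : R, forall j : nat, (Nat.max N0 i <= j)%nat -> Rabs (sigma i j) <= M)) ->
  (* (ii) *)
  0 < betaL -> betaL <= betaU ->
  (forall i j : nat, (N0 <= j)%nat -> (1 <= i <= j)%nat ->
     betaL <= beta alpha rho mu sigma i j <= betaU) ->
  exists (A : nat -> R) (k : nat -> nat -> R),
    forall j : nat, (N0 <= j)%nat ->
      / A j =
        betaSigma alpha rho mu sigma j + lambda
        - (alphaSigma alpha j *
           sum1 (fun i => lambda * A (S j) * exp (- alpha i * (k i (S j) - k i j)) / alpha i) j)
          * / A j
      /\ / (betaU + lambda) < A j <= / betaL
      /\ forall i : nat, (1 <= i <= j)%nat ->
           k i j = ((beta alpha rho mu sigma i j + lambda) * A j - 1) / alpha i
                   - lambda * A (S j) * exp (- alpha i * (k i (S j) - k i j)) / alpha i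
           /\ A j * exp (- alpha i * k i j) <= / betaL
           /\ - ln ((betaU + lambda) / betaL) <= alpha i * k i j
           /\ alpha i * k i j <= (betaU + lambda) / betaL - 1.
Proof.
intros HN0 Hlam Halpha Hrho Hbd HbL HbLU Hbeta.
destruct (M.limit_exists N0 lambda alpha rho mu sigma betaL (lo lambda betaL betaU) (hi lambda betaL betaU))
  as [p [Hb HS]].
{ intros T q. apply SS_dec. }
{ intros T. destruct (nonempty N0 lambda alpha rho mu sigma betaL betaU HN0 Hlam Halpha HbL HbLU Hbeta T)
    as [q [Hq HSq]]. exists q. split; [exact Hq|exact HSq]. }
exists (fun j => p (0%nat, j)), (fun i j => p (i, j) / alpha i).
intros j Hj.
destruct (HS j) as [He [Hs _]].
destruct (HS (S j)) as [_ [_ Hv]].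
assert (HA : 0 < p (0%nat, j)).
{ destruct (Hb (0%nat, j)) as [b _]. unfold lo in b. simpl in b.
  assert (0 < / (betaU + lambda)) by (apply Rinv_0_lt_compat; lra). lra. }
assert (HAn : 0 < p (0%nat, S j)).
{ destruct (Hb (0%nat, S j)) as [b _]. unfold lo in b. simpl in b.
  assert (0 < / (betaU + lambda)) by (apply Rinv_0_lt_compat; lra). lra. }
assert (Heq : forall i, (1 <= i <= j)%nat ->
   p (i, j) + lambda * p (0%nat, S j) * exp (- p (i, S j)) * exp (p (i, j))
   - (beta alpha rho mu sigma i j + lambda) * p (0%nat, j) + 1 = 0).
{ intros i Hi. apply (He i j). lia. }
assert (Hsum : sum1 (fun i => p (i, j) / alpha i) j = 0) by (apply Hs; lia).
destruct (derive_bounds N0 lambda alpha rho mu sigma betaL betaU HN0 Hlam Halpha HbL HbLU Hbeta j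
   (p (0%nat, j)) (p (0%nat, S j)) (fun i => p (i, j)) (fun i => p (i, S j)))
  as [HAl [HAu Hx]]; auto.
{ intros i Hi. assert (Vcon betaL i (S j) p <= 0) by (apply Hv; lia). unfold Vcon in H. lra. }
assert (Hexp : forall i, (1 <= i <= j)%nat ->
  exp (- alpha i * (p (i, S j) / alpha i - p (i, j) / alpha i)) = exp (- p (i, S j)) * exp (p (i, j))).
{ intros i Hi. assert (0 < alpha i) by (apply Halpha; lia).
  rewrite <- exp_plus. f_equal. field. lra. }
assert (Hj1 : (1 <= j)%nat) by lia.
split; [|split; [split; [exact HAl|exact HAu]|]].
- set (A := p (0%nat, j)) in *. set (A' := p (0%nat, S j)) in *.
  set (s := sum1 (fun i => / alpha i) j).
  set (Bs := sum1 (fun i => beta alpha rho mu sigma i j / alpha i) j).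
  set (Ws := sum1 (fun i => lambda * A' * exp (- p (i, S j)) * exp (p (i, j)) / alpha i) j).
  assert (Hs0 : 0 < s).
  { apply sum1_pos; auto. intros i Hi. apply Rinv_0_lt_compat, Halpha; lia. }
  assert (HW : sum1 (fun i => lambda * A' * exp (- alpha i * (p (i, S j) / alpha i - p (i, j) / alpha i)) / alpha i) j = Ws).
  { apply sum1_ext. intros i Hi. rewrite Hexp by auto. unfold Rdiv. ring. }
  assert (Hid : 0 = A * Bs + (lambda * A - 1) * s + (-1) * Ws).
  { rewrite <- Hsum. unfold Bs, s, Ws. rewrite <- !sum1_scal, <- !sum1_plus.
    apply sum1_ext. intros i Hi. assert (0 < alpha i) by (apply Halpha; lia).
    specialize (Heq i Hi). fold A A' in Heq.
    replace (p (i, j)) with ((beta alpha rho mu sigma i j + lambda) * A - 1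
        - lambda * A' * exp (- p (i, S j)) * exp (p (i, j))) at 1 by lra.
    field. lra. }
  rewrite HW. unfold betaSigma, alphaSigma. fold s. fold Bs.
  assert (HWs : Ws = A * Bs + (lambda * A - 1) * s) by lra.
  rewrite HWs. field. split; lra.
- intros i Hi. assert (Ha : 0 < alpha i) by (apply Halpha; lia).
  destruct (Hx i Hi) as [h1 [h2 h3]].
  assert (Hak : alpha i * (p (i, j) / alpha i) = p (i, j)) by (field; lra).
  rewrite Hak. split; [|split; [|split]].
  + rewrite Hexp by auto. specialize (Heq i Hi). 
    apply Rmult_eq_reg_l with (alpha i); [|lra].
    field_simplify; [|lra|lra]. lra.
  + replace (- alpha i * (p (i, j) / alpha i)) with (- p (i, j)) by (field; lra). exact h1.
  + exact h2.
  + exact h3.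
Qed.
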